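(* Let $U\in\mathcal{U}_N$ and $S\subseteq[n]$. Prepare the Choi–Jamiołkowski state $|v(U)\rangle$ (using one query to $U$), measure the $2|S|$ qubits in the registers $S\cup\{\tilde\ell:\ell\in S\}$ in the Bell basis $\{|v(\sigma_y)\rangle\}_{y\in\mathbb{Z}_4^{S}}$, and let $X=0$ if the outcome is $|v(I^{\otimes|S|})\rangle=|\mathrm{EPR}\rangle^{\otimes|S|}$ and $X=1$ otherwise. Then $\mathbb{E}[X]=\mathrm{Inf}_S[U]$.
   Context: $N=2^n$, $\mathcal{U}_N$ is the set of $N\times N$ unitaries. Pauli matrices: $\sigma_0=I$, $\sigma_1=X$, $\sigma_2=Y$, $\sigma_3=Z$; for $x\in\mathbb{Z}_4^n$, $\sigma_x=\sigma_{x_1}\otimes\cdots\otimes\sigma_{x_n}$ and $\mathrm{supp}(x)=\{i:x_i\ne0\}$. Every $U\in\mathbb{C}^{N\times N}$ can be uniquely written $U=\sum_{x\in\mathbb{Z}_4^n}\widehat{U}(x)\sigma_x$ (Pauli coefficients). The influence of $S\subseteq[n]$ on $U$ is $\mathrm{Inf}_S[U]=\sum_{x:\,\mathrm{supp}(x)\cap S\ne\emptyset}|\widehat{U}(x)|^2$. The Choi–Jamiołkowski state of an $N\times N$ matrix $A$ is $|v(A)\rangle=(A\otimes I)\frac{1}{\sqrt N}\sum_{i}|i\rangle|i\rangle$ on $2n$ qubits; qubit $\ell\in[n]$ (acted on by $A$) is paired with qubit $\tilde\ell\in\{n+1,\dots,2n\}$ with which it formed an EPR pair $|\mathrm{EPR}\rangle=(|00\rangle+|11\rangle)/\sqrt2$.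 For $y\in\mathbb{Z}_4^S$, $|v(\sigma_y)\rangle$ is the corresponding state on the $2|S|$ qubits $S\cup\{\tilde\ell:\ell\in S\}$. *)

(* Defs.v *)
(* Complex scalars: an arbitrary numClosedFieldType C
   (e.g. algC, or R[i] for a real closed field R). *)
From HB Require Import structures.
From mathcomp Require Import all_boot all_order all_algebra.
Set Implicit Arguments. Unset Strict Implicit. Unset Printing Implicit Defensive.
Import Order.TTheory GRing.Theory Num.Theory.
Local Open Scope ring_scope.

Section Defs.
Variable C : numClosedFieldType.

(* computational basis states of n qubits: bit strings *)
Definition bits (n : nat) := {ffun 'I_n -> bool}.

(* N x N matrices (N = 2^n), indexed by bit strings: U a b = <a|U|b> *)
Definition qmat (n : nat) := bits n -> bits n -> C.

Definition unitary n (U : qmat n) : Prop :=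
  forall a b : bits n, \sum_(k : bits n) U a k * (U b k)^* = (a == b)%:R.

(* single-qubit Paulis sigma_0 = I, sigma_1 = X, sigma_2 = Y, sigma_3 = Z;
   pauli1 k a b = <a|sigma_k|b>, with false = |0>, true = |1> *)
Definition pauli1 (k : 'I_4) (a b : bool) : C :=
  match val k with
  | 0 => (a == b)%:R
  | 1 => (a != b)%:R
  | 2 => if a == b then 0 else if b then - 'i else 'i
  | _ => if a == b then (if a then -1 else 1) else 0
  end.

Definition pauli n (x : {ffun 'I_n -> 'I_4}) : qmat n :=
  fun a b => \prod_(i : 'I_n) pauli1 (x i) (a i) (b i).

Definition supp_meets n (x : {ffun 'I_n -> 'I_4}) (S : {set 'I_n}) : bool :=
  [exists i in S, x i != ord0].

(* Inf_S[U] computed from the (unique) Pauli coefficients c of U *)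
Definition influence n (c : {ffun 'I_n -> 'I_4} -> C) (S : {set 'I_n}) : C :=
  \sum_(x : {ffun 'I_n -> 'I_4} | supp_meets x S) `|c x| ^+ 2.

(* Choi-Jamiolkowski state |v(A)> = (A (x) I) 1/sqrt N sum_i |i>|i> ;
   component at |a>|b> (a on qubits 1..n, b on the paired qubits ~1..~n) *)
Definition choi n (A : qmat n) (a b : bits n) : C :=
  A a b / sqrtC (2 ^ n)%:R.

Definition inS n (S : {set 'I_n}) := {i : 'I_n | i \in S}.
Definition outS n (S : {set 'I_n}) := {i : 'I_n | i \notin S}.

Definition glue n (S : {set 'I_n}) (aS : {ffun inS S -> bool})
    (aR : {ffun outS S -> bool}) : bits n :=
  [ffun i => match (insub i : option (inS S)) with
             | Some j => aS j
             | None => match (insub i : option (outS S)) with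
                       | Some j => aR j
                       | None => false
                       end
             end].

(* Bell basis state |v(sigma_y)> on the 2|S| qubits S u {~l : l in S},
   y in Z_4^S *)
Definition bellS n (S : {set 'I_n}) (y : {ffun inS S -> 'I_4})
    (aS bS : {ffun inS S -> bool}) : C :=
  (\prod_(j : inS S) pauli1 (y j) (aS j) (bS j)) / sqrtC (2 ^ #|S|)%:R.

(* (<v(sigma_y)| (x) I) |v(U)>: unnormalised post-measurement vector on
   the remaining registers, at |c>|d> *)
Definition post_amp n (U : qmat n) (S : {set 'I_n}) (y : {ffun inS S -> 'I_4})
    (c d : {ffun outS S -> bool}) : C :=
  \sum_(aS : {ffun inS S -> bool}) \sum_(bS : {ffun inS S -> bool})
     (bellS y aS bS)^* * choi U (glue aS c) (glue bS d).

Definition outcome_prob n (U : qmat n) (S : {set 'I_n})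
    (y : {ffun inS S -> 'I_4}) : C :=
  \sum_(c : {ffun outS S -> bool}) \sum_(d : {ffun outS S -> bool})
     `|post_amp U y c d| ^+ 2.

Definition Xval n (S : {set 'I_n}) (y : {ffun inS S -> 'I_4}) : C :=
  if y == [ffun => ord0] then 0 else 1.

Definition expect_X n (U : qmat n) (S : {set 'I_n}) : C :=
  \sum_(y : {ffun inS S -> 'I_4}) outcome_prob U y * Xval y.

End Defs.

(* Main.v *)
Require Import Defs.
From HB Require Import structures.
From mathcomp Require Import all_boot all_order all_algebra.
From mathcomp Require Import ring.
Import GRing.Theory Num.Theory.
Local Open Scope ring_scope.
Set Warnings "-notation-overridden,-ambiguous-paths".

Section H.
Variable C : numClosedFieldType.

Lemma pauli1_ortho (p q : 'I_4) :
  \sum_(a : bool) \sum_(b : bool) (pauli1 C p a b)^* * pauli1 C q a b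
  = 2 * (p == q)%:R.
Proof.
case: p => [[|[|[|[|p]]]] hp] //; case: q => [[|[|[|[|q]]]] hq] //;
rewrite /pauli1 /= !big_bool /= ?rmorph0 ?rmorph1 ?rmorphN ?conjCi ?rmorph1;
rewrite ?mulr0 ?mul0r ?mulr1 ?mul1r ?addr0 ?add0r ?mulrN ?mulNr ?opprK -?expr2 ?sqrCi ?opprK //. all: try (have -> : forall z : C, Num.Num_conj__canonical__GRing_RMorphism C z = z^* by []).
all: rewrite ?conjCi ?mulNr -?expr2 ?sqrCi ?expr1n; ring.
Qed.


Lemma pauli_ortho (I : finType) (u v : I -> 'I_4) :
  \sum_(a : {ffun I -> bool}) \sum_(b : {ffun I -> bool})
     (\prod_j pauli1 C (u j) (a j) (b j))^* * \prod_j pauli1 C (v j) (a j) (b j)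
  = \prod_j (2 * (u j == v j)%:R).
Proof.
under eq_bigr do rewrite -pauli1_ortho.
rewrite bigA_distr_bigA /=; apply: eq_bigr => a _.
rewrite bigA_distr_bigA /=; apply: eq_bigr => b _.
by rewrite rmorph_prod -big_split.
Qed.

Lemma prod_ind (I : finType) (u v : {ffun I -> 'I_4}) :
  \prod_j (2 * (u j == v j)%:R) = 2 ^+ #|I| * (u == v)%:R :> C.
Proof.
case: eqP => [->|/eqP neq].
  by rewrite mulr1; under eq_bigr do rewrite eqxx mulr1; rewrite prodr_const.
have [j hj] : exists j, u j != v j.
  apply/existsP; apply: contraR neq => /existsPn h; apply/eqP/ffunP => j.
  by move: (h j); rewrite negbK => /eqP.
by rewrite (bigD1 j) //= (negbTE hj) !mulr0 mul0r.
Qed.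

Lemma prod_sig (I : finType) (P : pred I) (F : I -> C) :
  \prod_(i | P i) F i = \prod_(x : {x | P x}) F (val x).
Proof.
rewrite (reindex_omap (val : {x | P x} -> I) insub); last first.
  by move=> i Pi; rewrite insubT.
by apply: eq_bigl=> -[i iA]/=; rewrite insubT ?iA /= ?eqxx.
Qed.
End H.

Definition rS {n} (S : {set 'I_n}) (x : {ffun 'I_n -> 'I_4}) : {ffun inS S -> 'I_4} :=
  [ffun j => x (val j)].
Definition rR {n} (S : {set 'I_n}) (x : {ffun 'I_n -> 'I_4}) : {ffun outS S -> 'I_4} :=
  [ffun j => x (val j)].

Lemma glue_in n (S : {set 'I_n}) (aS : {ffun inS S -> bool}) (aR : {ffun outS S -> bool}) (j : inS S) : glue aS aR (val j) = aS j.
Proof. by rewrite /glue ffunE valK. Qed.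

Lemma glue_out n (S : {set 'I_n}) (aS : {ffun inS S -> bool}) (aR : {ffun outS S -> bool}) (j : outS S) : glue aS aR (val j) = aR j.
Proof. by rewrite /glue ffunE insubN ?(valP j) // valK. Qed.

Lemma pauli_glue (C : numClosedFieldType) n (S : {set 'I_n}) (x : {ffun 'I_n -> 'I_4})
  (aS bS : {ffun inS S -> bool}) (c d : {ffun outS S -> bool}) :
  pauli C x (glue aS c) (glue bS d) =
  (\prod_(j : inS S) pauli1 C (rS S x j) (aS j) (bS j)) *
  \prod_(j : outS S) pauli1 C (rR S x j) (c j) (d j).
Proof.
rewrite /pauli (bigID (fun i => i \in S)) /=.
rewrite (@prod_sig C _ (fun i => i \in S)) (@prod_sig C _ (fun i => i \notin S)).
congr (_ * _); apply: eq_bigr => j _; by rewrite ?glue_in ?glue_out /rS /rR ffunE.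
Qed.

Section Main.
Variables (C : numClosedFieldType) (n : nat) (U : qmat C n)
    (cf : {ffun 'I_n -> 'I_4} -> C) (S : {set 'I_n}).
Hypothesis hU : forall a b : bits n, U a b = \sum_(x : {ffun 'I_n -> 'I_4}) cf x * pauli C x a b.

Definition PR (x : {ffun 'I_n -> 'I_4}) (c d : {ffun outS S -> bool}) : C :=
  \prod_(j : outS S) pauli1 C (rR S x j) (c j) (d j).
Local Notation sqs := (sqrtC (2 ^ #|S|)%:R : C).
Local Notation sqn := (sqrtC (2 ^ n)%:R : C).
Definition kap : C := 2 ^+ #|{: inS S}| / sqs / sqn.

Lemma conjE (z : C) : Num.Num_conj__canonical__GRing_RMorphism C z = z^*.
Proof. by []. Qed.

Lemma sqrt_conj (k : nat) : (sqrtC (k%:R : C))^* = sqrtC k%:R.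
Proof. by apply: conj_Creal; apply: ger0_real; rewrite sqrtC_ge0 ler0n. Qed.

Lemma conj_div_sqrt (a : C) (k : nat) : (a / sqrtC k%:R)^* = a^* / sqrtC k%:R.
Proof. rewrite rmorphM fmorphV; congr (_ * _^-1); exact: sqrt_conj. Qed.

Lemma post_amp_eq y c d :
  post_amp U y c d = kap * \sum_x ((rS S x == y)%:R * cf x * PR x c d).
Proof.
rewrite /post_amp /bellS /choi.
have e : forall aS bS : {ffun inS S -> bool},
  (\prod_j pauli1 C (y j) (aS j) (bS j) / sqs)^* * (U (glue aS c) (glue bS d) / sqn)
  = \sum_x (cf x * PR x c d / sqs / sqn) *
      ((\prod_j pauli1 C (y j) (aS j) (bS j))^* * \prod_j pauli1 C (rS S x j) (aS j) (bS j)).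
  move=> aS bS; rewrite hU mulr_suml mulr_sumr; apply: eq_bigr => x _.
  rewrite pauli_glue conj_div_sqrt /PR; ring.
under eq_bigr do under eq_bigr do rewrite e.
under eq_bigr do rewrite exchange_big /=.
rewrite exchange_big /= /kap mulr_sumr; apply: eq_bigr => x _.
under eq_bigr do rewrite -mulr_sumr.
rewrite -mulr_sumr pauli_ortho prod_ind eq_sym; ring.
Qed.


Lemma rSR_inj x x' : rS S x' = rS S x -> rR S x' = rR S x -> x' = x.
Proof.
move=> e1 e2; apply/ffunP => i; case: (boolP (i \in S)) => h.
  by have := congr1 (fun f : {ffun inS S -> 'I_4} => f (exist _ i h)) e1; rewrite !ffunE.
by have := congr1 (fun f : {ffun outS S -> 'I_4} => f (exist _ i h)) e2; rewrite !ffunE.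
Qed.

Definition F y x : C := (rS S x == y)%:R * cf x.

Lemma norm_post y c d : `|post_amp U y c d| ^+ 2 =
  kap * kap^* * \sum_x \sum_x' (F y x * (F y x')^*) * (PR x c d * (PR x' c d)^*).
Proof.
rewrite normCK post_amp_eq rmorphM rmorph_sum mulrACA; congr (_ * _).
rewrite mulr_suml; apply: eq_bigr => x _; rewrite mulr_sumr; apply: eq_bigr => x' _.
rewrite /F !rmorphM; ring.
Qed.

Lemma outcome_eq y : outcome_prob U y =
  kap * kap^* * 2 ^+ #|{: outS S}| * \sum_x (rS S x == y)%:R * (cf x * (cf x)^*).
Proof.
rewrite /outcome_prob.
under eq_bigr do under eq_bigr do rewrite norm_post.
under eq_bigr do rewrite -mulr_sumr.
rewrite -mulr_sumr -mulrA; congr (_ * _).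
under eq_bigr do rewrite exchange_big /=.
under eq_bigr do under eq_bigr do rewrite exchange_big /=.
rewrite exchange_big /=.
under eq_bigr do rewrite exchange_big /=.
rewrite mulr_sumr; apply: eq_bigr => x _.
under eq_bigr do (under eq_bigr do rewrite -mulr_sumr; rewrite -mulr_sumr).
have e : forall x', \sum_c \sum_d (PR x c d * (PR x' c d)^*) =
   2 ^+ #|{: outS S}| * (rR S x' == rR S x)%:R.
  move=> x'; rewrite -(@prod_ind C) -(@pauli_ortho C _ (rR S x') (rR S x)).
  by apply: eq_bigr => c _; apply: eq_bigr => d _; rewrite mulrC.
under eq_bigr do rewrite e.
rewrite (bigD1 x) //= eqxx big1 ?addr0.
  by rewrite /F rmorphM rmorph_nat; case: (rS S x == y) => /=; ring.
move=> x' hx'; case h3: (rR S x' == rR S x); last by rewrite !mulr0.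
rewrite /F; case h1: (rS S x == y); last by rewrite !mul0r.
case h2: (rS S x' == y); last by rewrite /= mul0r rmorph0 !mulr0 mul0r.
move: hx'; rewrite (rSR_inj _ _ (etrans (eqP h2) (esym (eqP h1))) (eqP h3)) eqxx.
by [].
Qed.

Lemma K1 : kap * kap^* * 2 ^+ #|{: outS S}| = 1.
Proof.
have cs : #|{: inS S}| = #|S| by rewrite card_sig; apply: eq_card.
have cr : #|{: outS S}| = #|~: S| by rewrite card_sig; apply: eq_card => i; rewrite !inE.
have hn : n = (#|S| + #|~: S|)%N by rewrite cardsC card_ord.
have h2 : (2 : C) != 0 by rewrite pnatr_eq0.
have h1 : sqs * sqs = 2 ^+ #|S| by rewrite -expr2 sqrtCK natrX.
have h3 : sqn * sqn = 2 ^+ #|S| * 2 ^+ #|~: S| by rewrite -expr2 sqrtCK natrX -exprD -hn.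
have ea : sqs != 0 by rewrite sqrtC_eq0 pnatr_eq0 expn_eq0.
have eb : sqn != 0 by rewrite sqrtC_eq0 pnatr_eq0 expn_eq0.
rewrite /kap !conj_div_sqrt rmorphXn rmorph_nat cs cr.
transitivity (2 ^+ #|S| * 2 ^+ #|S| * 2 ^+ #|~: S| / (sqs * sqs) / (sqn * sqn)).
  by field; rewrite ?ea ?eb.
rewrite h1 h3; field.
by rewrite !expf_neq0.
Qed.

Lemma Xval_rS x : Xval C (rS S x) = (supp_meets x S)%:R.
Proof.
rewrite /Xval /supp_meets; case: eqP => [h|h].
  case: existsP => // -[i /andP [iS]].
  have := congr1 (fun f : {ffun inS S -> 'I_4} => f (exist _ i iS)) h.
  by rewrite !ffunE /= => ->; rewrite eqxx.
case: existsP => // hn; exfalso; apply: h; apply/ffunP => j; rewrite !ffunE.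
case: j => i iS /=; apply/eqP/negPn/negP => hi; apply: hn; exists i; by rewrite iS.
Qed.

Lemma main : expect_X U S = influence cf S.
Proof.
rewrite /expect_X.
under eq_bigr do rewrite outcome_eq K1 mul1r mulr_suml.
rewrite exchange_big /= /influence [RHS]big_mkcond /=; apply: eq_bigr => x _.
rewrite (bigD1 (rS S x)) //= eqxx big1 ?addr0.
  by rewrite Xval_rS normCK; case: (supp_meets x S) => /=; ring.
by move=> y hy; rewrite eq_sym (negbTE hy) mul0r mul0r.
Qed.
End Main.

Theorem mainTheorem7 (C : numClosedFieldType) (n : nat) (U : qmat C n)
    (c : {ffun 'I_n -> 'I_4} -> C) (S : {set 'I_n}) :
  unitary U ->
  (forall a b : bits n, U a b = \sum_(x : {ffun 'I_n -> 'I_4}) c x * pauli C x a b) ->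
  expect_X U S = influence c S.
Proof. move=> _ hU; exact: (@main C n U c S hU). Qed.
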